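(* For every even integer $d\ge 4$ there exists a generalized bicycle code with parameters $[[d^2,2,d]]$ which is $(2,4)$-regular. All such codes are degenerate (having non-identity stabilizers of weight $4<d$), except when $d=4$.
   Context: For $a(x),b(x)\in R_n=\mathbb{F}_2[x]/\langle x^n-1\rangle$, the generalized bicycle (GB) code is the CSS code on $2n$ qubits whose X-check matrix $H_X$ has rows $x^i(a(x),b(x))$, $0\le i\le n-1$, and Z-check matrix $H_Z$ has rows $x^i(b(x^{-1}),a(x^{-1}))$ ($x^{-1}=x^{n-1}$); its minimum distance is the minimum weight of a Pauli operator commuting with all stabilizers but not in the stabilizer group. The code is $(2,4)$-regular if every row of $H_X$ and $H_Z$ has weight 4 and every column weight 2. A code of minimum distance $d$ is degenerate if its stabilizer group contains a non-identity element of weight less than $d$. *)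

(* Defs.v *)
From mathcomp Require Import all_boot all_order all_algebra.
Set Implicit Arguments. Unset Strict Implicit. Unset Printing Implicit Defensive.
Import GRing.Theory.
Local Open Scope ring_scope.

Lemma ord_pos n (j : 'I_n) : (0 < n)%N.
Proof. exact: leq_ltn_trans (leq0n j) (ltn_ord j). Qed.

Definition ord_subn n (j i : 'I_n) : 'I_n :=
  Ordinal (ltn_pmod (j + n - i) (ord_pos j)).

(* An element a(x) = sum_k a_k x^k of R_n = F_2[x]/<x^n - 1> is represented
   by its coefficient row vector (a_0, ..., a_{n-1}).
   circ a is the n x n matrix whose i-th row is the coefficient vector of
   x^i a(x), i.e. (circ a) i j = a_{(j - i) mod n}. *)
Definition circ n (a : 'rV['F_2]_n) : 'M['F_2]_n :=
  \matrix_(i, j) a 0 (ord_subn j i).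

Definition GB_HX n (a b : 'rV['F_2]_n) : 'M['F_2]_(n, n + n) :=
  row_mx (circ a) (circ b).

(* Rows x^i (b(x^{-1}), a(x^{-1})): the coefficient of x^j in x^i b(x^{-1})
   is b_{(i - j) mod n}, i.e. the transpose of circ b. *)
Definition GB_HZ n (a b : 'rV['F_2]_n) : 'M['F_2]_(n, n + n) :=
  row_mx (circ b)^T (circ a)^T.

Definition row_weight m N (H : 'M['F_2]_(m, N)) (i : 'I_m) : nat :=
  #|[set j : 'I_N | H i j != 0]|.
Definition col_weight m N (H : 'M['F_2]_(m, N)) (j : 'I_N) : nat :=
  #|[set i : 'I_m | H i j != 0]|.

Definition regular_code mx mz N (HX : 'M['F_2]_(mx, N)) (HZ : 'M['F_2]_(mz, N))
  (wr wc : nat) : Prop :=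
  [/\ forall i, row_weight HX i = wr, forall i, row_weight HZ i = wr,
      forall j, col_weight HX j = wc & forall j, col_weight HZ j = wc].

(* A Pauli operator on N qubits, up to phase, is X^x Z^z with x z : 'rV_N.
   Its weight is the number of qubits on which it acts non-trivially. *)
Definition pauli_weight N (x z : 'rV['F_2]_N) : nat :=
  #|[set j : 'I_N | (x 0 j != 0) || (z 0 j != 0)]|.

(* Stabilizer group of the CSS code (up to phase): generated by X^h for rows h
   of H_X and Z^h for rows h of H_Z. *)
Definition in_stabilizer mx mz N (HX : 'M['F_2]_(mx, N)) (HZ : 'M['F_2]_(mz, N))
  (x z : 'rV['F_2]_N) : Prop :=
  (x <= HX)%MS /\ (z <= HZ)%MS.

Definition commutes_with_stab mx mz N (HX : 'M['F_2]_(mx, N)) (HZ : 'M['F_2]_(mz, N))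
  (x z : 'rV['F_2]_N) : Prop :=
  z *m HX^T = 0 /\ x *m HZ^T = 0.

Definition logical_op mx mz N (HX : 'M['F_2]_(mx, N)) (HZ : 'M['F_2]_(mz, N))
  (x z : 'rV['F_2]_N) : Prop :=
  commutes_with_stab HX HZ x z /\ ~ in_stabilizer HX HZ x z.

Definition min_distance mx mz N (HX : 'M['F_2]_(mx, N)) (HZ : 'M['F_2]_(mz, N))
  (d : nat) : Prop :=
  (exists x z, logical_op HX HZ x z /\ pauli_weight x z = d) /\
  (forall x z, logical_op HX HZ x z -> (d <= pauli_weight x z)%N).

Definition css_params mx mz N (HX : 'M['F_2]_(mx, N)) (HZ : 'M['F_2]_(mz, N))
  (nq k d : nat) : Prop :=
  [/\ N = nq, (N - \rank HX - \rank HZ)%N = k & min_distance HX HZ d].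

Definition degenerate mx mz N (HX : 'M['F_2]_(mx, N)) (HZ : 'M['F_2]_(mz, N))
  (d : nat) : Prop :=
  exists x z, in_stabilizer HX HZ x z /\ (x != 0 \/ z != 0) /\
              (pauli_weight x z < d)%N.

(* Main.v *)
Require Import Defs.
From mathcomp Require Import all_boot all_order all_algebra.
From mathcomp Require Import zify ring.
Set Implicit Arguments. Unset Strict Implicit. Unset Printing Implicit Defensive.
Import GRing.Theory.
Local Open Scope ring_scope.


Notation F2 := 'F_2.

Lemma F2_cases (x : F2) : x = 0 \/ x = 1.
Proof. by case: x => [[|[|//]]] ?; [left|right]; apply/val_inj. Qed.

Lemma F2_addxx (x : F2) : x + x = 0.
Proof. by case: (F2_cases x) => ->; apply/val_inj. Qed.

Lemma F2_oppr (x : F2) : - x = x.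
Proof. by apply/eqP; rewrite eq_sym -subr_eq0 opprK F2_addxx. Qed.

Lemma F2_neq0 (x : F2) : (x != 0) = (x == 1).
Proof. by case: (F2_cases x) => ->. Qed.

Lemma F2_add_eq0 (x y : F2) : (x + y == 0) = (x == y).
Proof. by rewrite -[y]F2_oppr subr_eq0 F2_oppr. Qed.

Lemma F2_natr k : (k%:R : F2) = (odd k)%:R.
Proof.
elim: k => // k IH; rewrite -natr1 IH /=.
by case: (odd k) => /=; apply/val_inj.
Qed.

Lemma F2_b2 (b : bool) : ((b%:R : F2) != 0) = b.
Proof. by case: b. Qed.

Lemma F2_sum4 (b1 b2 b3 b4 : bool) :
  ~~ odd (b1 + b2 + b3 + b4) -> (b1%:R + b2%:R + b3%:R + b4%:R : F2) = 0.
Proof. by case: b1; case: b2; case: b3; case: b4 => //= _; apply/val_inj. Qed.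

Lemma mxF2_addxx m1 n1 (A : 'M[F2]_(m1, n1)) : A + A = 0.
Proof. by apply/matrixP => i j; rewrite !mxE F2_addxx. Qed.

Lemma dimarg (F : fieldType) N m1 m2 (H : 'M[F]_(m1,N)) (G : 'M_(m2,N))
  (Ls Ms : 'M_(2,N)) (z : 'rV_N) :
  G *m H^T = 0 -> Ls *m G^T = 0 -> Ms *m H^T = 0 -> Ls *m Ms^T = 1%:M ->
  (\rank H + \rank G + 2 = N)%N -> z *m H^T = 0 -> z *m Ls^T = 0 ->
  (z <= G)%MS.
Proof.
move=> GH LG MH LM rk zH zL.
set S := col_mx H Ls.
have rL : \rank Ls = 2%N.
  apply/eqP; rewrite eqn_leq rank_leq_row /=.
  by rewrite -{1}(mxrank1 F 2) -LM mxrankM_maxl.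
have rK : \rank (H :&: Ls)%MS = 0%N.
  apply/eqP; rewrite mxrank_eq0; apply/eqP.
  have /submxP [D eD] := capmxSr H Ls.
  have /submxP [E eE] := capmxSl H Ls.
  have : (H :&: Ls)%MS *m Ms^T = D by rewrite eD -mulmxA LM mulmx1.
  rewrite {1}eE -mulmxA -[H *m Ms^T]trmxK trmx_mul trmxK MH trmx0 mulmx0.
  by move=> D0; rewrite eD -D0 mul0mx.
have rS : \rank S = (\rank H + 2)%N.
  have := mxrank_sum_cap H Ls; rewrite rK addn0 rL => <-.
  by rewrite /S -addsmxE.
have GK : (G <= kermx S^T)%MS.
  rewrite sub_kermx /S tr_col_mx mul_mx_row GH.
  by rewrite -[G *m Ls^T]trmxK trmx_mul trmxK LG trmx0 row_mx0.
have zK : (z <= kermx S^T)%MS by rewrite sub_kermx /S tr_col_mx mul_mx_row zH zL row_mx0.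
have rKS : \rank (kermx S^T) = \rank G.
  by rewrite mxrank_ker mxrank_tr rS; lia.
apply: submx_trans zK _.
by have := (mxrank_leqif_sup GK).2; rewrite rKS eqxx => <-.
Qed.

Section GB.
Variable m : nat.
Local Notation n := m.+2.
Implicit Types (u v w p q : 'rV[F2]_n) (i j k s t : 'I_n).

Lemma ord_subnE j i : ord_subn j i = j - i.
Proof.
apply: val_inj => /=; rewrite modnDmr addnBA //.
exact: ltnW (ltn_ord i).
Qed.

Lemma circE (a : 'rV[F2]_n) i j : circ a i j = a 0 (j - i).
Proof. by rewrite mxE ord_subnE. Qed.

Definition dl (c : 'I_n) : 'rV[F2]_n := \row_k ((k == c)%:R).

Lemma sum_dl (F : 'I_n -> F2) c i :
  \sum_j F j * ((j - i == c)%:R) = F (i + c).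
Proof.
rewrite (bigD1 (i + c)) //= addrAC subrr add0r eqxx mulr1 big1 ?addr0 //.
move=> j /negbTE Hj; suff -> : (j - i == c) = false by rewrite mulr0.
by apply/negbTE; apply: contraFN Hj => /eqP <-; rewrite addrC subrK.
Qed.

Lemma sum_dr (F : 'I_n -> F2) c j :
  \sum_i F i * ((j - i == c)%:R) = F (j - c).
Proof.
rewrite (bigD1 (j - c)) //= opprB addrCA subrr addr0 eqxx mulr1 big1 ?addr0 //.
move=> i /negbTE Hi; suff -> : (j - i == c) = false by rewrite mulr0.
by apply/negbTE; apply: contraFN Hi => /eqP <-; rewrite opprB addrCA subrr addr0.
Qed.

Lemma circ2E s t i j :
  circ (dl s + dl t) i j = ((j - i == s)%:R + (j - i == t)%:R).
Proof. by rewrite circE !mxE. Qed.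

Lemma mulcT u s t i :
  (u *m (circ (dl s + dl t))^T) 0 i = u 0 (i + s) + u 0 (i + t).
Proof.
rewrite mxE; under eq_bigr => j _ do rewrite mxE circ2E mulrDr.
by rewrite big_split /= !sum_dl.
Qed.

Lemma mulc u s t j :
  (u *m circ (dl s + dl t)) 0 j = u 0 (j - s) + u 0 (j - t).
Proof.
rewrite mxE; under eq_bigr => i _ do rewrite circ2E mulrDr.
by rewrite big_split /= !sum_dr.
Qed.


Lemma HX_T_mul (a b : 'rV[F2]_n) u v :
  row_mx u v *m (GB_HX a b)^T = u *m (circ a)^T + v *m (circ b)^T.
Proof. by rewrite /GB_HX tr_row_mx mul_row_col. Qed.

Lemma HZ_T_mul (a b : 'rV[F2]_n) p q :
  row_mx p q *m (GB_HZ a b)^T = p *m circ b + q *m circ a.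
Proof. by rewrite /GB_HZ tr_row_mx !trmxK mul_row_col. Qed.

Lemma HX_mul (a b : 'rV[F2]_n) w :
  w *m GB_HX a b = row_mx (w *m circ a) (w *m circ b).
Proof. by rewrite /GB_HX mul_mx_row. Qed.

Lemma HZ_mul (a b : 'rV[F2]_n) w :
  w *m GB_HZ a b = row_mx (w *m (circ b)^T) (w *m (circ a)^T).
Proof. by rewrite /GB_HZ mul_mx_row. Qed.

Lemma circ_comm (a b : 'rV[F2]_n) : circ a *m circ b = circ b *m circ a.
Proof.
apply/matrixP => i j; rewrite !mxE (reindex_inj (subrI (i + j))) /=.
apply: eq_bigr => k _; rewrite !circE mulrC; congr (_ * _); congr (_ 0 _); ring.
Qed.

Lemma GB_comm (a b : 'rV[F2]_n) : GB_HZ a b *m (GB_HX a b)^T = 0.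
Proof.
rewrite /GB_HZ /GB_HX tr_row_mx mul_row_col -!trmx_mul circ_comm.
exact: mxF2_addxx.
Qed.

Lemma card_sumb (T : finType) (P : pred T) : #|[set x | P x]| = (\sum_x (P x : nat))%N.
Proof. by rewrite -sum1dep_card big_mkcond; apply: eq_bigr => x _; case: (P x). Qed.

Definition wt N (u : 'rV[F2]_N) := #|[set j | u 0 j != 0]|.

Lemma wt_row_mx u v : wt (row_mx u v) = (wt u + wt v)%N.
Proof.
rewrite /wt !card_sumb big_split_ord /=.
by congr (_ + _)%N; apply: eq_bigr => j _; rewrite ?row_mxEl ?row_mxEr.
Qed.

Definition pr N (x y : 'rV[F2]_N) := (x *m y^T) 0 0.

Lemma prE N (x y : 'rV[F2]_N) : pr x y = \sum_j x 0 j * y 0 j.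
Proof. by rewrite /pr mxE; apply: eq_bigr => j _; rewrite mxE. Qed.

Lemma pr_row_mx u v p q :
  pr (row_mx u v) (row_mx p q) = pr u p + pr v q.
Proof. by rewrite /pr tr_row_mx mul_row_col mxE. Qed.

Lemma prC N (x y : 'rV[F2]_N) : pr x y = pr y x.
Proof. by rewrite !prE; apply: eq_bigr => j _; rewrite mulrC. Qed.

Definition sh s u : 'rV[F2]_n := \row_j u 0 (j - s).

Lemma pr_nz N (x y : 'rV[F2]_N) :
  pr x y = 1 -> (0 < \sum_j ((x 0%R j != 0%R) && (y 0%R j != 0%R) : nat))%N.
Proof.
rewrite prE => H; rewrite lt0n; apply/negP => /eqP /eqP.
rewrite sum_nat_eq0 => /forallP H0.
move: H; rewrite big1 => [/eqP|j _]; first by rewrite eq_sym oner_eq0.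
have := H0 j; rewrite eqb0 negb_and !negbK => /orP [] /eqP ->;
  by rewrite ?mul0r ?mulr0.
Qed.

Lemma sum_shift (F : 'I_n -> nat) j : (\sum_s F (j - s)%R = \sum_s F s)%N.
Proof. by rewrite (reindex_inj (subrI j)) /=; apply: eq_bigr => s _; rewrite opprB addrCA subrr addr0. Qed.

Lemma avg1 (x y : 'rV[F2]_n) :
  (\sum_s (\sum_j ((x 0%R j != 0%R) && ((sh s y) 0%R j != 0%R) : nat)) = wt x * wt y)%N.
Proof.
rewrite exchange_big /wt card_sumb big_distrl /=.
apply: eq_bigr => j _.
under eq_bigr => s _ do rewrite mxE.
case: (x 0 j != 0) => /=; last by rewrite big1 // mul0n.
rewrite mul1n card_sumb -(sum_shift (fun k => (y 0%R k != 0%R : nat)) j).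
by apply: eq_bigr => s _.

Qed.

Lemma avg zl zr p q :
  (forall s, pr (row_mx zl zr) (row_mx (sh s p) (sh s q)) = 1) ->
  (n <= wt zl * wt p + wt zr * wt q)%N.
Proof.
move=> H; rewrite -!avg1 -big_split /=.
rewrite -[X in (X <= _)%N]card_ord -sum1_card.
apply: leq_sum => s _.
have := pr_nz (H s); rewrite big_split_ord /=.
by under eq_bigr => j _ do rewrite !row_mxEl; under [X in (_ + X)%N]eq_bigr => j _ do rewrite !row_mxEr.
Qed.


Lemma kerZE sa ta sb tb u v :
  (row_mx u v *m (GB_HX (dl sa + dl ta) (dl sb + dl tb))^T == 0) =
  [forall i, u 0 (i + sa) + u 0 (i + ta) + v 0 (i + sb) + v 0 (i + tb) == 0].
Proof.
rewrite HX_T_mul; apply/eqP/forallP => [H i | H].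
  by have := congr1 (fun M : 'rV[F2]_n => M 0 i) H; rewrite [LHS]mxE !mulcT mxE addrA => ->.
by apply/rowP => i; rewrite [LHS]mxE !mulcT mxE addrA; apply/eqP.
Qed.

Lemma kerXE sa ta sb tb p q :
  (row_mx p q *m (GB_HZ (dl sa + dl ta) (dl sb + dl tb))^T == 0) =
  [forall j, p 0 (j - sb) + p 0 (j - tb) + q 0 (j - sa) + q 0 (j - ta) == 0].
Proof.
rewrite HZ_T_mul; apply/eqP/forallP => [H i | H].
  by have := congr1 (fun M : 'rV[F2]_n => M 0 i) H; rewrite [LHS]mxE !mulc mxE addrA => ->.
by apply/rowP => i; rewrite [LHS]mxE !mulc mxE addrA; apply/eqP.
Qed.

Definition rf u : 'rV[F2]_n := \row_j u 0 (- j).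
Definition Rf (x : 'rV[F2]_(n + n)) := row_mx (rf (rsubmx x)) (rf (lsubmx x)).

Lemma Rf_row p q : Rf (row_mx p q) = row_mx (rf q) (rf p).
Proof. by rewrite /Rf row_mxKl row_mxKr. Qed.

Lemma rfK u : rf (rf u) = u.
Proof. by apply/rowP => j; rewrite !mxE opprK. Qed.

Lemma RfK x : Rf (Rf x) = x.
Proof. by rewrite /Rf row_mxKl row_mxKr !rfK hsubmxK. Qed.

Lemma wt_rf u : wt (rf u) = wt u.
Proof.
rewrite /wt !card_sumb (reindex_inj oppr_inj) /=.
by apply: eq_bigr => j _; rewrite mxE opprK.
Qed.

Lemma wt_Rf x : wt (Rf x) = wt x.
Proof. by rewrite -{2}(hsubmxK x) /Rf !wt_row_mx !wt_rf addnC. Qed.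

Lemma Rf_ker sa ta sb tb x :
  x *m (GB_HZ (dl sa + dl ta) (dl sb + dl tb))^T = 0 ->
  Rf x *m (GB_HX (dl sa + dl ta) (dl sb + dl tb))^T = 0.
Proof.
rewrite -(hsubmxK x); move: (lsubmx x) (rsubmx x) => p q.
rewrite Rf_row => /eqP; rewrite kerXE => /forallP H.
apply/eqP; rewrite kerZE; apply/forallP => i; rewrite !mxE.
move/eqP: (H (- i)) => E; apply/eqP; apply: etrans _ E; rewrite !opprD; ring.
Qed.

Lemma Rf_sub sa ta sb tb y :
  (y <= GB_HZ (dl sa + dl ta) (dl sb + dl tb))%MS ->
  (Rf y <= GB_HX (dl sa + dl ta) (dl sb + dl tb))%MS.
Proof.
case/submxP => w ->; rewrite HZ_mul Rf_row.
apply/submxP; exists (rf w); rewrite HX_mul; congr row_mx; apply/rowP => j;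
  by rewrite [LHS]mxE mulcT mulc !mxE; congr (_ + _); congr (w 0 _); ring.
Qed.

Lemma F2_xor (b1 b2 : bool) : (((b1%:R + b2%:R : F2)) != 0) = (b1 != b2).
Proof. by case: b1; case: b2. Qed.

Lemma card_rowc s t i : s != t ->
  #|[set j | circ (dl s + dl t) i j != 0]| = 2%N.
Proof.
move=> st; have -> : [set j | circ (dl s + dl t) i j != 0] = [set i + s; i + t].
  apply/setP => j; rewrite !inE circ2E F2_xor.
  have E : forall k, (j - i == k) = (j == i + k) by move=> k; rewrite subr_eq addrC.
  rewrite !E; case: (j =P i + s) => [e1|_]; case: (j =P i + t) => [e2|_] //=.
  by move: st; rewrite (addrI i (etrans (esym e1) e2)) eqxx.
by rewrite cards2 (inj_eq (addrI i)) st.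
Qed.

Lemma card_colc s t j : s != t ->
  #|[set i | circ (dl s + dl t) i j != 0]| = 2%N.
Proof.
move=> st; have -> : [set i | circ (dl s + dl t) i j != 0] = [set j - s; j - t].
  apply/setP => i; rewrite !inE circ2E F2_xor.
  have E : forall k, (j - i == k) = (i == j - k).
    by move=> k; rewrite subr_eq addrC -subr_eq eq_sym.
  rewrite !E; case: (i =P j - s) => [e1|_]; case: (i =P j - t) => [e2|_] //=.
  by move: st; rewrite (subrI j (etrans (esym e1) e2)) eqxx.
by rewrite cards2 (inj_eq (subrI j)) st.
Qed.

Lemma regular_GB s t s' t' : s != t -> s' != t' ->
  regular_code (GB_HX (dl s + dl t) (dl s' + dl t')) (GB_HZ (dl s + dl t) (dl s' + dl t')) 4 2.
Proof.
move=> st st'; split.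
- move=> i; rewrite /row_weight card_sumb big_split_ord /=.
  under eq_bigr => j _ do rewrite row_mxEl.
  under [X in (_ + X)%N]eq_bigr => j _ do rewrite row_mxEr.
  by rewrite -!card_sumb !card_rowc.
- move=> i; rewrite /row_weight card_sumb big_split_ord /=.
  under eq_bigr => j _ do rewrite row_mxEl mxE.
  under [X in (_ + X)%N]eq_bigr => j _ do rewrite row_mxEr mxE.
  by rewrite -!card_sumb !card_colc.
- move=> j; rewrite /col_weight /GB_HX.
  case: (split_ordP j) => k ->.
    under eq_finset => i do rewrite row_mxEl.
    by rewrite card_colc.
  under eq_finset => i do rewrite row_mxEr.
  by rewrite card_colc.
- move=> j; rewrite /col_weight /GB_HZ.
  case: (split_ordP j) => k ->.
    under eq_finset => i do rewrite row_mxEl mxE.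
    by rewrite card_rowc.
  under eq_finset => i do rewrite row_mxEr mxE.
  by rewrite card_rowc.
Qed.

End GB.

Lemma F2_eq_add (x y : F2) : x + y = 0 -> x = y.
Proof. by move/eqP; rewrite F2_add_eq0 => /eqP. Qed.

Lemma rank_const N mm (H : 'M[F2]_(mm.+1, N)) :
  (const_mx 1 : 'rV[F2]_(mm.+1)) *m H = 0 ->
  (forall w : 'rV_(mm.+1), w *m H = 0 -> forall i, w 0 i = w 0 0) ->
  \rank H = mm.
Proof.
move=> H1 Hc.
have r1 : \rank (const_mx 1 : 'rV[F2]_(mm.+1)) = 1%N.
  rewrite rank_rV; case: eqP => // /rowP /(_ 0); rewrite !mxE => /eqP.
  by rewrite oner_eq0.
have sK : ((const_mx 1 : 'rV[F2]_(mm.+1)) <= kermx H)%MS by rewrite sub_kermx H1.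
have Ks : (kermx H <= (const_mx 1 : 'rV[F2]_(mm.+1)))%MS.
  apply/row_subP => i.
  have Hw : row i (kermx H) *m H = 0 by rewrite -row_mul mulmx_ker row0.
  have -> : row i (kermx H) = (row i (kermx H)) 0 0 *: (const_mx 1 : 'rV[F2]_(mm.+1)).
    by apply/rowP => j; rewrite (Hc _ Hw j) [RHS]mxE [X in _ * X]mxE mulr1.
  exact: scalemx_sub.
have := (mxrank_leqif_sup sK).2; rewrite Ks r1 mxrank_ker => /eqP.
by have := rank_leq_row H; lia.
Qed.

Section Code.
Variable m : nat.
Local Notation n := m.+2.
Variable c : 'I_n.
Local Notation aa := (dl 0 + dl 1 : 'rV[F2]_n).
Local Notation bb := (dl 0 + dl c : 'rV[F2]_n).
Local Notation HX := (GB_HX aa bb).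
Local Notation HZ := (GB_HZ aa bb).
Implicit Types (u v w p q : 'rV[F2]_n).

Lemma kerX_shift s p q :
  row_mx p q *m HZ^T = 0 -> row_mx (sh s p) (sh s q) *m HZ^T = 0.
Proof.
move/eqP; rewrite kerXE => /forallP H; apply/eqP; rewrite kerXE; apply/forallP => j.
rewrite !mxE !subr0; have := H (j - s); rewrite !subr0.
by rewrite ![j - _ - s]addrAC.
Qed.

Lemma kerX_shift1 p q :
  row_mx p q *m HZ^T = 0 -> row_mx (sh 1 p) (sh 1 q) + row_mx p q = p *m HX.
Proof.
move/eqP; rewrite kerXE => /forallP H.
rewrite HX_mul add_row_mx; congr row_mx; apply/rowP => j; rewrite [LHS]mxE mulc !mxE !subr0.
  by rewrite addrC.
have := H j; rewrite !subr0 => /eqP E.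
by apply: F2_eq_add; apply: etrans _ E; ring.
Qed.

Lemma sh0 u : sh 0 u = u.
Proof. by apply/rowP => j; rewrite mxE subr0. Qed.

Lemma shS k u : sh (k.+1%:R) u = sh 1 (sh k%:R u).
Proof. by apply/rowP => j; rewrite !mxE -natr1 opprD addrA addrAC. Qed.

Lemma kerX_trans p q s :
  row_mx p q *m HZ^T = 0 -> ((row_mx (sh s p) (sh s q) + row_mx p q)%R <= HX)%MS.
Proof.
move=> H; rewrite -[s]natr_Zp; elim: (nat_of_ord s) => [|k IH].
  by rewrite !sh0 mxF2_addxx sub0mx.
have -> : (row_mx (sh k.+1%:R p) (sh k.+1%:R q) + row_mx p q)%R =
   ((row_mx (sh 1 (sh k%:R p)) (sh 1 (sh k%:R q)) + row_mx (sh k%:R p) (sh k%:R q))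
   + (row_mx (sh k%:R p) (sh k%:R q) + row_mx p q))%R.
  by rewrite !shS addrA -[X in X + _ = _]addr0 -(mxF2_addxx (row_mx (sh k%:R p) (sh k%:R q))) !addrA.
rewrite addmx_sub // kerX_shift1 ?submxMl //.
exact: kerX_shift.
Qed.

Lemma pr_trans z p q s :
  z *m HX^T = 0 -> row_mx p q *m HZ^T = 0 ->
  pr z (row_mx (sh s p) (sh s q)) = pr z (row_mx p q).
Proof.
move=> Hz Hl; have /submxP [w Ew] := kerX_trans s Hl.
have : z *m (row_mx (sh s p) (sh s q) + row_mx p q)^T = 0.
  by rewrite Ew trmx_mul mulmxA Hz mul0mx.
rewrite linearD mulmxDr /= => /(congr1 (fun M : 'M[F2]_1 => M 0 0)).
by rewrite mxE [RHS]mxE => /F2_eq_add.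
Qed.

Lemma HX_rank : \rank HX = m.+1.
Proof.
apply: rank_const.
  rewrite HX_mul; apply/eqP; rewrite -row_mx0; apply/eqP; congr row_mx;
  by apply/rowP => j; rewrite mulc !mxE F2_addxx.
move=> w; rewrite HX_mul => /eqP; rewrite -row_mx0 => /eqP /eq_row_mx [Ha _] i.
have Hs : forall j, w 0 j = w 0 (j - 1).
  by move=> j; apply: F2_eq_add; have := congr1 (fun M : 'rV[F2]_n => M 0 j) Ha;
    rewrite mulc subr0 mxE.
rewrite -[i]natr_Zp; elim: (nat_of_ord i) => // k IH.
by rewrite Hs -natr1 addrK.
Qed.

Lemma HZ_rank : \rank HZ = m.+1.
Proof.
apply: rank_const.
  rewrite HZ_mul; apply/eqP; rewrite -row_mx0; apply/eqP; congr row_mx;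
  by apply/rowP => j; rewrite mulcT !mxE F2_addxx.
move=> w; rewrite HZ_mul => /eqP; rewrite -row_mx0 => /eqP /eq_row_mx [_ Ha] i.
have Hs : forall j, w 0 (j + 1) = w 0 j.
  by move=> j; symmetry; apply: F2_eq_add; have := congr1 (fun M : 'rV[F2]_n => M 0 j) Ha;
    rewrite mulcT addr0 mxE.
rewrite -[i]natr_Zp; elim: (nat_of_ord i) => // k IH.
by rewrite -natr1 Hs.
Qed.

End Code.


Lemma modD_sub N j k : (j < N)%N -> (k <= N)%N ->
  ((j + (N - k)) %% N = if (j < k)%N then j + N - k else j - k)%N.
Proof.
move=> jN kN; case: ifP => jk.
  by rewrite modn_small; lia.
have -> : (j + (N - k) = (j - k) + N)%N by lia.
by rewrite modnDr modn_small; lia.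
Qed.

Lemma modD_add N j k : (j < N)%N -> (k < N)%N ->
  ((j + k) %% N = if (j + k < N)%N then j + k else j + k - N)%N.
Proof.
move=> jN kN; case: ifP => jk; first by rewrite modn_small.
have -> : (j + k = (j + k - N) + N)%N by lia.
by rewrite modnDr modn_small; lia.
Qed.

Ltac bcase := repeat match goal with
 | |- context [ if ?b then _ else _ ] => let H := fresh "H" in case: ifP => H
 | |- context [ (?x == ?y)%N ] => let H := fresh "H" in case: (boolP (x == y)%N) => H
 | |- context [ (?x < ?y)%N ] => let H := fresh "H" in case: (boolP (x < y)%N) => H
 | |- context [ (?x <= ?y)%N ] => let H := fresh "H" in case: (boolP (x <= y)%N) => H
 end.

Lemma arith2 h N wl wr : (2 <= h)%N -> N = (2 * h * h)%N ->
  (N <= wl * 1 + wr * (2 * h - 1))%N -> (N <= wl * h.+1 + wr * (h - 1))%N ->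
  (2 * h <= wl + wr)%N.
Proof. move=> *; nia. Qed.

Section Concrete.
Variables h m : nat.
Hypothesis hh : (2 <= h)%N.
Hypothesis hn : m.+2 = (2 * h * h)%N.
Local Notation n := m.+2.
Local Notation d := (2 * h)%N.
Local Notation cc := (2 * h - 1)%N.

Lemma cc_lt : (cc < n)%N.
Proof. rewrite hn; nia. Qed.

Definition c : 'I_n := Ordinal cc_lt.
Local Notation aa := (dl 0 + dl 1 : 'rV[F2]_n).
Local Notation bb := (dl 0 + dl c : 'rV[F2]_n).
Local Notation HX := (GB_HX aa bb).
Local Notation HZ := (GB_HZ aa bb).

Definition vecP (P : pred nat) : 'rV[F2]_n := \row_j (P j)%:R.

Lemma val1 : val (1 : 'I_n) = 1%N.
Proof. by rewrite /= modn_small. Qed.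

Lemma valB (j k : 'I_n) : val (j - k) = ((j + (n - k)) %% n)%N.
Proof. by rewrite /= modnDmr. Qed.

Lemma valD (j k : 'I_n) : val (j + k) = ((j + k) %% n)%N.
Proof. by []. Qed.

Lemma dvd_dn : (d %| n)%N.
Proof. by rewrite hn dvdn_mulr. Qed.

Lemma LDnat r : (r < d)%N ->
  ~~ odd ((r == 1)%N + ((r + 1) %% d == 1)%N + (r == 0)%N + ((r + (d - 1)) %% d == 0)%N).
Proof.
move=> rd; case: r rd => [|[|r]] rd.
- by rewrite add0n !modn_small //=; lia.
- have -> : (1 + (d - 1) = d)%N by lia.
  by rewrite modnn modn_small //; lia.
- have e1 : ((r.+2 + 1) %% d == 1)%N = false.
    case: (ltnP (r.+3) d) => H; first by rewrite addn1 modn_small.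
    have -> : (r.+2 + 1 = d)%N by lia.
    by rewrite modnn.
  have e2 : ((r.+2 + (d - 1)) %% d == 0)%N = false.
    have -> : (r.+2 + (d - 1) = r.+1 + d)%N by lia.
    by rewrite modnDr modn_small //; lia.
  by rewrite e1 e2.
Qed.

Definition LDp := vecP (fun j => j %% d == 1)%N.
Definition LDq := vecP (fun j => j %% d == 0)%N.
Definition LD := row_mx LDp LDq.

Lemma LD_kerX : LD *m HZ^T = 0.
Proof.
apply/eqP; rewrite kerXE; apply/forallP => j; rewrite !subr0 !mxE !valB val1.
rewrite /= !modn_dvdm ?dvd_dn //.
rewrite F2_sum4 //.
have -> : (j + (n - cc) = (h - 1) * d + (j + 1))%N by nia.
have -> : (j + (n - 1) = (h - 1) * d + (j + (d - 1)))%N by nia.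
rewrite !modnMDl -(modnDml j 1) -(modnDml j (d - 1)).
by apply: LDnat; rewrite ltn_mod; lia.
Qed.

Lemma LD_kerZ : LD *m HX^T = 0.
Proof.
apply/eqP; rewrite kerZE; apply/forallP => j; rewrite !addr0 !mxE !valD val1 /=.
rewrite !modn_dvdm ?dvd_dn //.
rewrite F2_sum4 //.
rewrite -(modnDml j 1) -(modnDml j (2 * h - 1)).
by apply: LDnat; rewrite ltn_mod; lia.
Qed.

Lemma n_big : (2 * h + 2 <= n)%N.
Proof. nia. Qed.

Definition L2p := vecP (fun j => j == 0)%N.
Definition L2q := vecP (fun j => j < cc)%N.
Definition L2 := row_mx L2p L2q.

Lemma L2_kerX : L2 *m HZ^T = 0.
Proof.
apply/eqP; rewrite kerXE; apply/forallP => j; rewrite !subr0 !mxE !valB val1 /=.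
rewrite F2_sum4 //.
have := n_big; have := ltn_ord j.
rewrite !modD_sub //; try nia.
move: (nat_of_ord j) => k *; bcase => //; lia.
Qed.

Definition M2u := vecP (fun j => 0 < j < d)%N.
Definition M2v := vecP (fun j => j == cc)%N.
Definition M2 := row_mx M2u M2v.

Lemma M2_kerZ : M2 *m HX^T = 0.
Proof.
apply/eqP; rewrite kerZE; apply/forallP => j; rewrite !addr0 !mxE !valD val1 /=.
rewrite F2_sum4 //.
have := n_big; have := ltn_ord j.
rewrite !modD_add //; try nia.
move: (nat_of_ord j) => k *; bcase => //; lia.
Qed.

Definition L3p := vecP (fun j => (j %% cc == 0) && (j %/ cc <= h))%N.
Definition L3q := vecP (fun j => j < h - 1)%N.
Definition L3 := row_mx L3p L3q.

Lemma L3p_lo k : (k < cc)%N ->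
  (((k + n - cc) %% cc == 0) && ((k + n - cc) %/ cc <= h))%N = (k == h - 1)%N.
Proof.
move=> kc.
have -> : (k + n - cc = (h - 1) * cc + (k + h))%N by nia.
rewrite modnMDl divnMDl; last by lia.
case: (ltnP (k + h) cc) => H.
  rewrite modn_small // divn_small //; lia.
have -> : (k + h = (k + h - cc) + cc)%N by lia.
rewrite modnDr divnDr ?dvdnn // divnn modn_small; last by lia.
rewrite divn_small; last by lia.
apply/idP/idP; lia.
Qed.

Lemma L3p_div k : (k < n)%N -> (k %/ cc <= h)%N.
Proof. move=> kn; rewrite -ltnS ltn_divLR; last by lia. nia. Qed.

Lemma L3p_hi k : (cc <= k)%N -> (k < n)%N ->
  (((k - cc) %% cc == 0) && ((k - cc) %/ cc <= h))%N = (k %% cc == 0)%N.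
Proof.
move=> ck kn; have hk := L3p_div kn.
have E : (k = (k - cc) + cc)%N by lia.
rewrite {3}E modnDr.
have -> : ((k - cc) %/ cc <= h)%N by apply: leq_trans hk; apply: leq_div2r; lia.
by rewrite andbT.
Qed.

Lemma L3_kerX : L3 *m HZ^T = 0.
Proof.
apply/eqP; rewrite kerXE; apply/forallP => j; rewrite !subr0 !mxE !valB val1 /=.
rewrite F2_sum4 //.
have := n_big; have := ltn_ord j.
rewrite !modD_sub //; try nia.
move: (nat_of_ord j) => k kn nb.
case: (ltnP k cc) => kc.
  rewrite L3p_lo // modn_small // divn_small //.
  bcase => //; lia.
rewrite L3p_hi // (L3p_div kn) andbT.
bcase => //; lia.
Qed.

Lemma prP (P Q : pred nat) :
  pr (vecP P) (vecP Q) = \sum_(j : 'I_n) ((P j && Q j) : nat)%:R.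
Proof. by rewrite prE; apply: eq_bigr => j _; rewrite !mxE -natrM mulnb. Qed.

Lemma sum_single (F : pred nat) k : (k < n)%N ->
  (forall j, (j < n)%N -> F j = (j == k)%N) -> \sum_(j : 'I_n) ((F j : nat)%:R : F2) = 1.
Proof.
move=> kn HF; rewrite (bigD1 (Ordinal kn)) //= HF // eqxx big1 ?addr0 //.
move=> j Hj; rewrite HF // ; case: eqP => // E.
by move: Hj; rewrite -val_eqE /= E eqxx.
Qed.

Lemma sum_none (F : pred nat) :
  (forall j, (j < n)%N -> F j = false) -> \sum_(j : 'I_n) ((F j : nat)%:R : F2) = 0.
Proof. by move=> HF; rewrite big1 // => j _; rewrite HF. Qed.

Lemma prP1 (P Q : pred nat) k : (k < n)%N ->
  (forall j, (j < n)%N -> (P j && Q j) = (j == k)%N) -> pr (vecP P) (vecP Q) = 1.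
Proof. by move=> kn H; rewrite prP; apply: (sum_single (F := fun j => P j && Q j) kn). Qed.

Lemma prP0 (P Q : pred nat) :
  (forall j, (j < n)%N -> (P j && Q j) = false) -> pr (vecP P) (vecP Q) = 0.
Proof. by move=> H; rewrite prP; apply: (sum_none (F := fun j => P j && Q j)). Qed.

Lemma pr_LD_M2 : pr LD M2 = 1.
Proof.
rewrite pr_row_mx [pr LDq _]prP0 ?addr0.
  rewrite /LDp /LDq /L2p /L2q /L3p /L3q /M2u /M2v; apply: (prP1 (k := 1%N)); first by lia.
  move=> j jn; case: (ltnP j d) => jd.
    by rewrite modn_small //; bcase => //; lia.
  by bcase => //; lia.
move=> j jn; apply/negP => /andP [/eqP H1 /eqP H2]; move: H1; rewrite H2 modn_small; lia.
Qed.

Lemma pr_L2_M2 : pr L2 M2 = 0.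
Proof.
rewrite pr_row_mx !prP0 ?addr0 // => j jn; bcase => //; lia.
Qed.

Lemma pr_L2_LD : pr L2 LD = 1.
Proof.
rewrite pr_row_mx [pr L2p _]prP0 ?add0r.
  rewrite /LDp /LDq /L2p /L2q /L3p /L3q /M2u /M2v; apply: (prP1 (k := 0%N)); first by lia.
  move=> j jn; case: (ltnP j d) => jd.
    by rewrite modn_small //; bcase => //; lia.
  by bcase => //; lia.
by move=> j jn; case: eqP => //= ->; rewrite mod0n.
Qed.

Lemma pr_L3_M2 : pr L3 M2 = 1.
Proof.
rewrite pr_row_mx [pr L3q _]prP0 ?addr0.
  rewrite /LDp /LDq /L2p /L2q /L3p /L3q /M2u /M2v; apply: (prP1 (k := cc)); first by nia.
  move=> j jn; case: (ltnP j cc) => jc.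
    by rewrite modn_small //; bcase => //; lia.
  case: (ltnP j d) => jd.
    have -> : j = cc by lia.
    by rewrite modnn divnn; bcase => //; lia.
  by bcase => //; lia.
by move=> j jn; bcase => //; lia.
Qed.

Lemma pr_L3_LD : pr L3 LD = 1.
Proof.
rewrite pr_row_mx [pr L3p _]prP0 ?add0r.
  rewrite /LDp /LDq /L2p /L2q /L3p /L3q /M2u /M2v; apply: (prP1 (k := 0%N)); first by lia.
  move=> j jn; case: (ltnP j d) => jd.
    by rewrite modn_small //; bcase => //; lia.
  by bcase => //; lia.
move=> j jn; apply/negP => /andP [/andP [/eqP jc jh]] /eqP j1.
have Ej : j = (j %/ cc * cc)%N by rewrite {1}(divn_eq j cc) jc addn0.
move: (j %/ cc)%N Ej jh => k Ej jh.
have : ((k * cc + k) %% d = 0)%N.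
  have -> : (k * cc + k = k * d)%N by nia.
  by rewrite modnMl.
rewrite -modnDml -Ej j1.
case: k Ej jh => [|k] Ej jh.
  by move: j1; rewrite Ej mul0n mod0n.
rewrite modn_small; lia.
Qed.

Lemma sumLD_shift :
  \sum_(j : 'I_n) (((j %% d == 1)%N : nat)%:R : F2) = \sum_(j : 'I_n) (((j %% d == 0)%N : nat)%:R).
Proof.
rewrite (reindex_inj (addrI 1)) /=; apply: eq_bigr => j _.
rewrite modn_dvdm ?dvd_dn // (modn_small (m:=1)) // -modnDmr.
have : (j %% d < d)%N by rewrite ltn_mod; lia.
move: (j %% d)%N => r rd.
case: (ltnP (1 + r) d) => H.
  rewrite modn_small //; bcase => //; lia.
have -> : (1 + r = d)%N by lia.
by rewrite modnn; bcase => //; lia.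
Qed.

Lemma pr_LD_LD : pr LD LD = 0.
Proof.
rewrite pr_row_mx !prP.
under eq_bigr => j _ do rewrite andbb.
under [X in _ + X]eq_bigr => j _ do rewrite andbb.
by rewrite sumLD_shift F2_addxx.
Qed.

Lemma wt_vecP (P : pred nat) : wt (vecP P) = #|[set j : 'I_n | P j]|.
Proof. by rewrite /wt; apply: eq_card => j; rewrite !inE mxE F2_b2. Qed.

Lemma wt_le (P : pred nat) (K : nat) (g : nat -> nat) :
  (forall j, (j < n)%N -> P j -> exists2 k, (k < K)%N & j = g k) -> (wt (vecP P) <= K)%N.
Proof.
move=> H; rewrite wt_vecP.
apply: (@leq_trans #|[set (inZp (g k) : 'I_n) | k : 'I_K]|); last first.
  by apply: leq_trans (leq_imset_card _ _) _; rewrite card_ord.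
apply: subset_leq_card; apply/subsetP => j; rewrite inE => Pj.
have [k kK Ej] := H j (ltn_ord j) Pj.
apply/imsetP; exists (Ordinal kK) => //; apply: val_inj => /=.
by rewrite -Ej modn_small.
Qed.

Lemma wt_LDp : (wt LDp <= h)%N.
Proof.
apply: (@wt_le _ _ (fun k => k * d + 1)%N) => j jn /eqP H.
exists (j %/ d)%N; last by rewrite {1}(divn_eq j d) H.
by rewrite ltn_divLR; nia.
Qed.

Lemma wt_LDq : (wt LDq <= h)%N.
Proof.
apply: (@wt_le _ _ (fun k => k * d)%N) => j jn /eqP H.
exists (j %/ d)%N; last by rewrite {1}(divn_eq j d) H addn0.
by rewrite ltn_divLR; nia.
Qed.

Lemma wt_L2p : (wt L2p <= 1)%N.
Proof. by apply: (@wt_le _ _ (fun k => k)) => j jn /eqP ->; exists 0%N. Qed.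

Lemma wt_L2q : (wt L2q <= cc)%N.
Proof. by apply: (@wt_le _ _ (fun k => k)) => j jn jc; exists j. Qed.

Lemma wt_L3p : (wt L3p <= h.+1)%N.
Proof.
apply: (@wt_le _ _ (fun k => k * cc)%N) => j jn /andP [/eqP H1 H2].
by exists (j %/ cc)%N; last by rewrite {1}(divn_eq j cc) H1 addn0.
Qed.

Lemma wt_L3q : (wt L3q <= h - 1)%N.
Proof. by apply: (@wt_le _ _ (fun k => k)) => j jn jc; exists j. Qed.

Lemma wt_M2 : (wt M2 <= d)%N.
Proof.
rewrite wt_row_mx.
have H1 : (wt M2u <= cc)%N.
  apply: (@wt_le _ _ (fun k => k.+1)) => j jn /andP [j0 jd].
  by exists j.-1; lia.
have H2 : (wt M2v <= 1)%N.
  by apply: (@wt_le _ _ (fun k => cc)) => j jn /eqP ->; exists 0%N.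
lia.
Qed.

Lemma mx11 (M : 'M[F2]_1) : M = (M 0 0)%:M.
Proof. by apply/matrixP => i j; rewrite !ord1 !mxE eqxx mulr1n. Qed.

Lemma prD N (x y1 y2 : 'rV[F2]_N) : pr x (y1 + y2) = pr x y1 + pr x y2.
Proof. by rewrite !prE -big_split; apply: eq_bigr => j _; rewrite mxE mulrDr. Qed.

Lemma pr_sub0 N mm (x y : 'rV[F2]_N) (H : 'M[F2]_(mm, N)) :
  x *m H^T = 0 -> (y <= H)%MS -> pr x y = 0.
Proof. by move=> Hx /submxP [w ->]; rewrite /pr trmx_mul mulmxA Hx mul0mx mxE. Qed.

Lemma pairing (A B C D : 'rV[F2]_(n + n)) :
  pr A C = 1 -> pr A D = 0 -> pr B C = 0 -> pr B D = 1 ->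
  col_mx A B *m (col_mx C D)^T = 1%:M.
Proof.
move=> h1 h2 h3 h4.
rewrite tr_col_mx mul_col_row (mx11 (A *m C^T)) (mx11 (A *m D^T)) (mx11 (B *m C^T)) (mx11 (B *m D^T)).
rewrite -[(A *m C^T) 0 0]/(pr A C) -[(A *m D^T) 0 0]/(pr A D).
rewrite -[(B *m C^T) 0 0]/(pr B C) -[(B *m D^T) 0 0]/(pr B D) h1 h2 h3 h4.
have Z : (0%:M : 'M[F2]_1) = 0 by apply/matrixP => i j; rewrite !mxE mul0rn.
by rewrite Z -scalar_mx_block.
Qed.

Lemma Z11 : (0%:M : 'M[F2]_1) = 0.
Proof. by apply/matrixP => i j; rewrite !mxE mul0rn. Qed.

Lemma rk_sum : (\rank HX + \rank HZ + 2 = n + n)%N.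
Proof. by rewrite HX_rank HZ_rank; lia. Qed.

Lemma pr_col0 N (z A B : 'rV[F2]_N) : pr z A = 0 -> pr z B = 0 -> z *m (col_mx A B)^T = 0.
Proof.
move=> e1 e2; rewrite tr_col_mx mul_mx_row (mx11 (z *m A^T)) (mx11 (z *m B^T)).
by rewrite -[(z *m A^T) 0 0]/(pr z A) -[(z *m B^T) 0 0]/(pr z B) e1 e2 Z11 row_mx0.
Qed.

Lemma dimZ z : z *m HX^T = 0 -> pr z LD = 0 -> pr z L2 = 0 -> (z <= HZ)%MS.
Proof.
move=> Hz e1 e2.
have Ls0 : col_mx LD L2 *m HZ^T = 0 by rewrite mul_col_mx LD_kerX L2_kerX col_mx0.
have Ms0 : col_mx M2 LD *m HX^T = 0 by rewrite mul_col_mx M2_kerZ LD_kerZ col_mx0.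
have LM : col_mx LD L2 *m (col_mx M2 LD)^T = 1%:M.
  by apply: pairing; [exact: pr_LD_M2 | exact: pr_LD_LD | exact: pr_L2_M2 | exact: pr_L2_LD].
exact: (dimarg (GB_comm _ _) Ls0 Ms0 LM rk_sum Hz (pr_col0 e1 e2)).
Qed.

Lemma dimX x : x *m HZ^T = 0 -> pr x M2 = 0 -> pr x LD = 0 -> (x <= HX)%MS.
Proof.
move=> Hx e1 e2.
have C : HX *m HZ^T = 0 by rewrite -[HX *m _]trmxK trmx_mul trmxK GB_comm trmx0.
have Ls0 : col_mx M2 LD *m HX^T = 0 by rewrite mul_col_mx M2_kerZ LD_kerZ col_mx0.
have Ms0 : col_mx LD L2 *m HZ^T = 0 by rewrite mul_col_mx LD_kerX L2_kerX col_mx0.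
have LM : col_mx M2 LD *m (col_mx LD L2)^T = 1%:M.
  apply: pairing; try rewrite prC; [exact: pr_LD_M2 | exact: pr_L2_M2 | exact: pr_LD_LD | exact: pr_L2_LD].
have rk : (\rank HZ + \rank HX + 2 = n + n)%N by rewrite HX_rank HZ_rank; lia.
exact: (dimarg C Ls0 Ms0 LM rk Hx (pr_col0 e1 e2)).
Qed.

Lemma sumL_HX : ((LD + L2 + L3)%R <= HX)%MS.
Proof.
apply: dimX.
- by rewrite !mulmxDl LD_kerX L2_kerX L3_kerX !addr0.
- by rewrite prC !prD ![pr M2 _]prC pr_LD_M2 pr_L2_M2 pr_L3_M2 addr0 F2_addxx.
- by rewrite prC !prD [pr LD L2]prC [pr LD L3]prC pr_LD_LD pr_L2_LD pr_L3_LD add0r F2_addxx.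
Qed.

Lemma lowZ z : z *m HX^T = 0 -> ~~ (z <= HZ)%MS -> (d <= wt z)%N.
Proof.
move=> Hz nz.
have [p1 | [p0 p2]] : pr z LD = 1 \/ (pr z LD = 0 /\ pr z L2 = 1).
  case: (F2_cases (pr z LD)) => e1; last by left.
  case: (F2_cases (pr z L2)) => e2; last by right.
  by move/negP: nz; case; apply: dimZ.
- move: Hz p1; rewrite -(hsubmxK z) wt_row_mx.
  move: (lsubmx z) (rsubmx z) => zl zr Hz p1.
  have := avg (p := LDp) (q := LDq) (fun s => etrans (pr_trans s Hz LD_kerX) p1).
  have := wt_LDp; have := wt_LDq; nia.
- have p3 : pr z L3 = 1.
    have := pr_sub0 Hz sumL_HX; rewrite !prD p0 p2 add0r.
    by case: (F2_cases (pr z L3)) => -> //.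
  move: Hz p2 p3; rewrite -(hsubmxK z) wt_row_mx.
  move: (lsubmx z) (rsubmx z) => zl zr Hz p2 p3.
  have I1 : (n <= wt zl * 1 + wt zr * cc)%N.
    apply: leq_trans (avg (p := L2p) (q := L2q) (fun s => etrans (pr_trans s Hz L2_kerX) p2)) _.
    by apply: leq_add; apply: leq_mul => //; [exact: wt_L2p | exact: wt_L2q].
  have I2 : (n <= wt zl * h.+1 + wt zr * (h - 1))%N.
    apply: leq_trans (avg (p := L3p) (q := L3q) (fun s => etrans (pr_trans s Hz L3_kerX) p3)) _.
    by apply: leq_add; apply: leq_mul => //; [exact: wt_L3p | exact: wt_L3q].
  exact: (arith2 hh hn I1 I2).
Qed.

Lemma lowX x : x *m HZ^T = 0 -> ~~ (x <= HX)%MS -> (d <= wt x)%N.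
Proof.
move=> Hx nx; rewrite -wt_Rf; apply: lowZ; first exact: Rf_ker.
apply: contra nx => /Rf_sub; by rewrite RfK.
Qed.

Lemma code_ok : regular_code HX HZ 4 2 /\ css_params HX HZ (n + n) 2 d.
Proof.
have ne01 : (0 : 'I_n) != 1 by rewrite -val_eqE val1.
have ne0c : (0 : 'I_n) != c by rewrite -val_eqE /=; lia.
split; first exact: regular_GB.
have nM2 : ~~ (M2 <= HZ)%MS.
  apply/negP => H; have := pr_sub0 LD_kerX H; rewrite pr_LD_M2 => /eqP.
  by rewrite oner_eq0.
split => //; first by rewrite HX_rank HZ_rank; lia.
split.
  exists 0, M2; split.
    split; first by split; [exact: M2_kerZ | rewrite mul0mx].
    by case => _ H; move/negP: nM2.
  have -> : pauli_weight 0 M2 = wt M2.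
    by apply: eq_card => j; rewrite !inE mxE eqxx.
  by apply/eqP; rewrite eqn_leq wt_M2 lowZ // M2_kerZ.
move=> x z [[Hz Hx] ns].
case: (boolP (z <= HZ)%MS) => hz.
  have nx : ~~ (x <= HX)%MS by apply/negP => hx; apply: ns; split.
  apply: leq_trans (lowX Hx nx) _; apply: subset_leq_card; apply/subsetP => j.
  by rewrite !inE => ->.
apply: leq_trans (lowZ Hz hz) _; apply: subset_leq_card; apply/subsetP => j.
by rewrite !inE => ->; rewrite orbT.
Qed.

End Concrete.


Lemma per4 (g : 'I_8) : g != 0 -> exists j, g *+ j = 4.
Proof.
by case: g => [[|[|[|[|[|[|[|[|]]]]]]]] ?] //= _;
  [exists 4%N|exists 2%N|exists 4%N|exists 1%N|exists 4%N|exists 2%N|exists 4%N];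
  apply/val_inj.
Qed.

Lemma per_mult (f : 'I_8 -> F2) g : (forall l, f (l + g) = f l) ->
  forall j l, f (l + g *+ j) = f l.
Proof.
move=> H; elim=> [|j IH] l; first by rewrite mulr0n addr0.
by rewrite mulrS addrA IH H.
Qed.

Lemma sum8 (F : 'I_8 -> nat) :
  (\sum_k F k = F 0%R + F 1%R + F 2%R + F 3%R + F 4%R + F 5%R + F 6%R + F 7%R)%N.
Proof.
rewrite (eq_bigr (fun k : 'I_8 => F (inZp k))); last by move=> k _; rewrite valZpK.
rewrite -(big_mkord xpredT (fun i => F (inZp i))) !Zp_nat.
rewrite unlock /= addn0 !addnA; (do 7 congr (_ + _)%N). all: try (by []). all: try (congr F; apply/val_inj). all: by vm_compute.
Qed.

Lemma Hshift (f : 'I_8 -> F2) : (forall l, f (l + 4) = f l) ->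
  forall al, f (0 + al) + f (1 + al) + f (2 + al) + f (3 + al) = f 0 + f 1 + f 2 + f 3.
Proof.
move=> H al; rewrite -[al]natr_Zp; elim: (nat_of_ord al) => [|k IH].
  by rewrite !addr0.
rewrite -IH -natr1.
have -> : 3 + (k%:R + 1) = (0 + k%:R) + 4 :> 'I_8.
  by rewrite (_ : 4 = 3 + 1 :> 'I_8); [ring | apply/val_inj].
rewrite H.
have -> : 0 + (k%:R + 1) = 1 + k%:R :> 'I_8 by ring.
have -> : 1 + (k%:R + 1) = 2 + k%:R :> 'I_8.
  by rewrite (_ : 2 = 1 + 1 :> 'I_8); [ring | apply/val_inj].
have -> : 2 + (k%:R + 1) = 3 + k%:R :> 'I_8.
  by rewrite (_ : 3 = 2 + 1 :> 'I_8); [ring | apply/val_inj].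
ring.
Qed.

Lemma F2_val (x : F2) : x = ((x != 0) : nat)%:R.
Proof. by case: (F2_cases x) => ->. Qed.

Lemma wt_natr N (u : 'rV[F2]_N) : ((wt u)%:R : F2) = \sum_k u 0 k.
Proof.
rewrite /wt card_sumb natr_sum; apply: eq_bigr => k _.
by rewrite [RHS]F2_val.
Qed.

Lemma wt0 N (u : 'rV[F2]_N) : wt u = 0%N -> u = 0.
Proof.
move/eqP; rewrite cards_eq0 => /eqP E; apply/rowP => j.
have : j \notin [set j | u 0 j != 0] by rewrite E inE.
by rewrite inE negbK mxE => /eqP.
Qed.

Definition yv (w : 'rV[F2]_8) (a b : 'I_8) : 'rV[F2]_8 := \row_k (w 0 (k + a) + w 0 (k + b)).

Lemma sum_shiftF (f : 'I_8 -> F2) a : \sum_k f (k + a) = \sum_k f k.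
Proof. by rewrite (reindex_inj (addIr (- a))) /=; apply: eq_bigr => k _; rewrite subrK. Qed.

Lemma yv_even w a b : ~~ odd (wt (yv w a b)).
Proof.
have : ((wt (yv w a b))%:R : F2) = 0.
  rewrite wt_natr; under eq_bigr => k _ do rewrite mxE.
  by rewrite big_split /= !(sum_shiftF (fun k => w 0 k)) F2_addxx.
by rewrite F2_natr; case: (odd _).
Qed.

Lemma half w a1 b1 a2 b2 : a1 != b1 -> yv w a1 b1 = 0 -> wt (yv w a2 b2) != 2%N.
Proof.
move=> ab Y1.
have P1 : forall l, w 0 (l + (b1 - a1)) = w 0 l.
  move=> l; have := congr1 (fun M : 'rV[F2]_8 => M 0 (l - a1)) Y1; rewrite !mxE.
  move/F2_eq_add; rewrite subrK => ->; congr (w 0 _); ring.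
have g0 : b1 - a1 != 0 by rewrite subr_eq0 eq_sym.
have [j Ej] := per4 g0.
have P4 : forall l, w 0 (l + 4) = w 0 l.
  by move=> l; rewrite -Ej (per_mult (f := fun l => w 0 l)).
set Y := yv w a2 b2.
have PY : forall k, Y 0 (k + 4) = Y 0 k.
  by move=> k; rewrite !mxE -(P4 (k + a2)) -(P4 (k + b2)); congr (w 0 _ + w 0 _); ring.
have HY : Y 0 0 + Y 0 1 + Y 0 2 + Y 0 3 = 0.
  have e1 := Hshift P4 a2; have e2 := Hshift P4 b2.
  rewrite !mxE.
  transitivity ((w 0 (0 + a2) + w 0 (1 + a2) + w 0 (2 + a2) + w 0 (3 + a2)) +
                (w 0 (0 + b2) + w 0 (1 + b2) + w 0 (2 + b2) + w 0 (3 + b2))).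
    by rewrite ![_ + a2]addrC ![_ + b2]addrC; ring.
  by rewrite e1 e2 F2_addxx.
rewrite /wt card_sumb sum8.
have e4 : Y 0 4 = Y 0 0 by rewrite -(PY 0) add0r.
have e5 : Y 0 5 = Y 0 1 by rewrite -(PY 1); congr (Y 0 _); apply/val_inj.
have e6 : Y 0 6 = Y 0 2 by rewrite -(PY 2); congr (Y 0 _); apply/val_inj.
have e7 : Y 0 7 = Y 0 3 by rewrite -(PY 3); congr (Y 0 _); apply/val_inj.
rewrite e4 e5 e6 e7.
move: HY; rewrite (F2_val (Y 0 0)) (F2_val (Y 0 1)) (F2_val (Y 0 2)) (F2_val (Y 0 3)).
rewrite -!natrD F2_natr.
case: (Y 0 0 != 0); case: (Y 0 1 != 0); case: (Y 0 2 != 0); case: (Y 0 3 != 0) => //=.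
Qed.

Lemma ev2 (k1 k2 : nat) : ~~ odd k1 -> ~~ odd k2 -> (k1 + k2 < 4)%N -> k1 = 0%N \/ k2 = 0%N.
Proof.
move=> o1 o2 H; case: k1 o1 H => [|[|k1]] o1 H; [by left | by [] |].
case: k2 o2 H => [|[|k2]] o2 H; [by right | by [] | lia].
Qed.

Lemma ev0 (k : nat) : ~~ odd k -> (k < 4)%N -> k != 2%N -> k = 0%N.
Proof. by case: k => [|[|[|[|k]]]]. Qed.

Lemma key8 w a1 b1 a2 b2 : a1 != b1 -> a2 != b2 ->
  (wt (yv w a1 b1) + wt (yv w a2 b2) < 4)%N -> yv w a1 b1 = 0 /\ yv w a2 b2 = 0.
Proof.
move=> ab1 ab2 H.
have e1 := yv_even w a1 b1; have e2 := yv_even w a2 b2.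
case: (ev2 e1 e2 H) => z.
  have y1 := wt0 z; split => //; apply: wt0; apply: ev0 => //; last exact: half ab1 y1.
  by move: H; rewrite z.
have y2 := wt0 z; split => //; apply: wt0; apply: ev0 => //; last exact: half ab2 y2.
by move: H; rewrite z addn0.
Qed.

Lemma nondeg8 (s t s' t' : 'I_8) : s != t -> s' != t' ->
  ~ degenerate (GB_HX (dl s + dl t) (dl s' + dl t')) (GB_HZ (dl s + dl t) (dl s' + dl t')) 4.
Proof.
move=> st st' [x [z [[hx hz] [nz pw]]]].
have wx : (wt x <= pauli_weight x z)%N.
  by apply: subset_leq_card; apply/subsetP => j; rewrite !inE => ->.
have wz : (wt z <= pauli_weight x z)%N.
  by apply: subset_leq_card; apply/subsetP => j; rewrite !inE => ->; rewrite orbT.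
case: nz => /eqP; apply.
  case/submxP: hx => w Ew; move: wx pw; rewrite Ew HX_mul.
  have -> : w *m circ (dl s + dl t) = yv w (- s) (- t) by apply/rowP => j; rewrite mulc mxE.
  have -> : w *m circ (dl s' + dl t') = yv w (- s') (- t') by apply/rowP => j; rewrite mulc mxE.
  rewrite wt_row_mx => H pw.
  have [-> ->] := @key8 w (- s) (- t) (- s') (- t')
    ltac:(by rewrite (inj_eq oppr_inj)) ltac:(by rewrite (inj_eq oppr_inj)) (leq_ltn_trans H pw).
  by rewrite row_mx0.
case/submxP: hz => w Ew; move: wz pw; rewrite Ew HZ_mul.
have -> : w *m (circ (dl s' + dl t'))^T = yv w s' t' by apply/rowP => j; rewrite mulcT mxE.
have -> : w *m (circ (dl s + dl t))^T = yv w s t by apply/rowP => j; rewrite mulcT mxE.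
rewrite wt_row_mx => H pw.
have [-> ->] := @key8 w s' t' s t st' st (leq_ltn_trans H pw).
by rewrite row_mx0.
Qed.

Lemma reg_wt m (a b : 'rV[F2]_m.+2) :
  regular_code (GB_HX a b) (GB_HZ a b) 4 2 -> wt a = 2%N /\ wt b = 2%N.
Proof.
case=> _ _ Hc _.
have E : forall u : 'rV[F2]_m.+2, #|[set i | circ u i 0 != 0]| = wt u.
  move=> u; rewrite /wt !card_sumb (reindex_inj oppr_inj) /=.
  by apply: eq_bigr => i _; rewrite circE sub0r opprK.
split.
  have := Hc (lshift _ 0); rewrite /col_weight /GB_HX.
  by under eq_finset => i do rewrite row_mxEl; rewrite E.
have := Hc (rshift _ 0); rewrite /col_weight /GB_HX.
by under eq_finset => i do rewrite row_mxEr; rewrite E.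
Qed.

Lemma wt2_dl m (u : 'rV[F2]_m.+2) : wt u = 2%N -> exists s t, s != t /\ u = dl s + dl t.
Proof.
move/eqP/cards2P => [s [t [st E]]]; exists s, t; split => //.
apply/rowP => k; rewrite !mxE (F2_val (u 0 k)).
have : (k \in [set j | u 0 j != 0]) = (k \in [set s; t]) by rewrite E.
rewrite !inE => ->.
case: (k =P s) => [ks|_]; case: (k =P t) => [kt|_] /=; rewrite ?addr0 ?add0r //.
by move: st; rewrite -ks kt eqxx.
Qed.

Local Close Scope ring_scope.

Theorem theorem8 (d : nat) :
  (4 <= d)%N -> ~~ odd d ->
  (exists a b : 'rV['F_2]_((d ^ 2)./2),
      regular_code (GB_HX a b) (GB_HZ a b) 4 2 /\
      css_params (GB_HX a b) (GB_HZ a b) (d ^ 2) 2 d) /\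
  (forall a b : 'rV['F_2]_((d ^ 2)./2),
      regular_code (GB_HX a b) (GB_HZ a b) 4 2 ->
      css_params (GB_HX a b) (GB_HZ a b) (d ^ 2) 2 d ->
      (degenerate (GB_HX a b) (GB_HZ a b) d <-> d <> 4%N)).
Proof.
move=> d4 ev.
have hd : d = (2 * d./2)%N by rewrite -{1}(odd_double_half d) (negbTE ev) add0n mul2n.
move: (d./2) hd => h hd.
have hh : (2 <= h)%N by lia.
have Ed : ((d ^ 2)./2 = 2 * h * h)%N.
  by rewrite hd (_ : ((2 * h) ^ 2 = (2 * h * h).*2)%N) ?doubleK //; rewrite -mul2n; nia.
split.
  have hn : (2 * h * h - 2).+2 = (2 * h * h)%N by nia.
  rewrite Ed -hn.
  have [R C] := code_ok hh hn.
  exists (dl 0 + dl 1)%R, (dl 0 + dl (c hh hn))%R; split => //.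
  have -> : (d ^ 2 = (2 * h * h - 2).+2 + (2 * h * h - 2).+2)%N by rewrite hd; nia.
  by rewrite hd.
move=> a b reg css; split.
  move=> dg d4'; move: a b reg css dg; rewrite d4' /= => a b reg css.
  have [wa wb] := reg_wt reg.
  have [s [t [st ->]]] := wt2_dl wa.
  have [s' [t' [st' ->]]] := wt2_dl wb.
  exact: nondeg8.
move=> dn4.
have n0 : (0 < (d ^ 2)./2)%N by rewrite Ed; nia.
set i0 : 'I_((d ^ 2)./2) := Ordinal n0.
case: reg => Hr _ _ _.
exists (row i0 (GB_HX a b)), 0%R; split; first by split; [exact: row_sub | exact: sub0mx].
have pw : pauli_weight (row i0 (GB_HX a b)) 0%R = 4%N.
  rewrite -(Hr i0) /pauli_weight /row_weight; apply: eq_card => j.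
  by rewrite !inE !mxE eqxx orbF.
split; last by rewrite pw; lia.
left; apply/eqP => E; move: pw; rewrite E.
by rewrite /pauli_weight (eq_card (B := pred0)) ?card0 // => j; rewrite !inE !mxE eqxx.
Qed.
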